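(* Let $p\geq 7$ be a prime and $q$ an odd prime with $q<p$. Let $X$ be a connected vertex-transitive graph of order $2pq$, let $G$ be a minimal transitive subgroup of $\mathrm{Aut}(X)$, and let $N$ be a nontrivial normal subgroup of $G$ whose orbits form a complete block system $\mathcal{B}$ of $G$ with blocks of size $r$, where $r\in\{2p,2q,pq\}$. Let $N_0$ be a minimal normal subgroup of $G$ whose orbits are the same blocks as those of $N$. If $N_0$ acts unfaithfully on some block of $\mathcal{B}$, then for any two blocks $A,B\in\mathcal{B}$ that are adjacent in the quotient graph $X_{\mathcal{B}}$, the bipartite subgraph $X[A,B]$ is isomorphic to $K_{r,r}$; consequently $X$ contains a Hamilton cycle.
   Context: A transitive subgroup $G$ of $\mathrm{Aut}(X)$ is minimal transitive if no proper subgroup of $G$ is transitive on $V(X)$. The quotient graph $X_{\mathcal{B}}$ has vertex set $\mathcal{B}$, two blocks being adjacent if some vertex of one is adjacent in $X$ to some vertex of the other. For disjoint $A,B\subseteq V(X)$, $X[A,B]$ is the bipartite subgraph with parts $A,B$ consisting of all edges of $X$ between $A$ and $B$. $N_0$ acts unfaithfully on a block $A$ if some nonidentity element of $N_0$ fixes every vertex of $A$. *)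

(* Defs.v *)
From mathcomp Require Import all_boot all_fingroup all_solvable.
Set Implicit Arguments. Unset Strict Implicit. Unset Printing Implicit Defensive.


Definition simple_graph (T : finType) (e : rel T) : Prop :=
  symmetric e /\ irreflexive e.

Definition autg (T : finType) (e : rel T) : {set {perm T}} :=
  [set g : {perm T} | [forall x, [forall y, e (g x) (g y) == e x y]]].

Definition connected_graph (T : finType) (e : rel T) : Prop :=
  forall x y : T, connect e x y.

Definition vertex_transitive (T : finType) (e : rel T) : Prop :=
  [transitive autg e, on [set: T] | 'P].

Definition minimal_transitive (T : finType) (e : rel T) (G : {group {perm T}}) : Prop :=
  [/\ G \subset autg e, [transitive G, on [set: T] | 'P] &
      forall H : {group {perm T}}, H \proper G -> ~~ [transitive H, on [set: T] | 'P]].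

Definition orbit_blocks (T : finType) (N : {group {perm T}}) : {set {set T}} :=
  [set orbit 'P N x | x : T].

Definition hamiltonian (T : finType) (e : rel T) : Prop :=
  exists s : seq T, [/\ uniq s, size s = #|T| & path.cycle e s].

(* Main.v *)
Require Import Defs.
From mathcomp Require Import all_boot all_fingroup all_solvable.
Set Implicit Arguments. Unset Strict Implicit. Unset Printing Implicit Defensive.
Import GroupScope.

Lemma abelian_dvd_prime (gT : finGroupType) (K : {group gT}) b :
  prime b -> (#|K| %| b)%N -> abelian K.
Proof.
move=> pb dK; have [e1|n1] := eqVneq #|K| 1%N.
  by rewrite (card1_trivg e1) abelian1.
by have /(prime_nt_dvdP pb n1) eK := dK; apply/cyclic_abelian/prime_cyclic; rewrite eK.
Qed.

Section Helpers.
Variable gT : finGroupType.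
Implicit Types H K L : {group gT}.



Lemma perfect_index2 H L : L \subset H -> #|H : L| = 2 -> H^`(1) = H -> H \subset L.
Proof.
move=> sLH iHL dH; have nLH := normal_norm (index2_normal sLH iHL).
rewrite -{1}dH; apply: der1_min (nLH) _.
apply: (@abelian_dvd_prime _ _ 2) => //; by rewrite card_quotient; [rewrite iHL | exact: nLH].
Qed.

Lemma perfect_triv_abelian H : H^`(1) = H -> abelian H -> H :=: 1.
Proof. by move=> dH /derG1P; rewrite dH. Qed.

Lemma perfect_small H a b : prime a -> prime b -> (b < a)%N ->
  (#|H| %| a * b)%N -> H^`(1) = H -> H :=: 1.
Proof.
move=> pa pb ltba dH perH.
have cop_ba : coprime b a by rewrite prime_coprime // dvdn_prime2 // ltn_eqF.
have [aH | naH] := boolP (a %| #|H|)%N; last first.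
  apply: perfect_triv_abelian => //; apply: (abelian_dvd_prime pb).
  by rewrite -(@Gauss_dvdr _ a) // coprime_sym prime_coprime.
have [P sylP] := Sylow_exists a H.
have sPH := pHall_sub sylP.
have iHP : (#|H : P| %| b)%N.
  have : (a^').-nat #|H : P| by case/and3P: sylP.
  rewrite p'natE // => naI.
  have dI : (#|H : P| %| a * b)%N := dvdn_trans (dvdn_indexg H P) dH.
  by rewrite -(@Gauss_dvdr _ a) // coprime_sym prime_coprime.
have nPH : H \subset 'N(P).
  have : #|'Syl_a(H)| = 1%N.
    have d1 : (#|'Syl_a(H)| %| b)%N.
      rewrite (card_Syl sylP); apply: dvdn_trans iHP.
      by apply: indexgS; rewrite subsetI sPH normG.
    have cm := card_Syl_mod H pa; have [//|ns1] := eqVneq #|'Syl_a(H)| 1%N.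
    by move: cm; rewrite (prime_nt_dvdP pb ns1 d1) modn_small // => b1; move: (prime_gt1 pb); rewrite b1.
  move/eqP/normal_sylowP => [Q sylQ nQH].
  have [x xH ->] := Sylow_trans sylQ sylP.
  by rewrite (normP (subsetP (normal_norm nQH) x xH)) (normal_norm nQH).
have sHP : H \subset P.
  rewrite -{1}perH; apply: der1_min (nPH) _.
  by apply: (abelian_dvd_prime pb); rewrite card_quotient.
have eHP : P :=: H by apply/eqP; rewrite eqEsubset sPH sHP.
apply: perfect_triv_abelian => //; apply: (abelian_dvd_prime pa).
have aP : a.-group P by case/and3P: sylP.
rewrite -eHP; rewrite -eHP in dH.
rewrite -(@Gauss_dvdl _ _ b) //; apply: pnat_coprime aP _.
by rewrite p'natE // dvdn_prime2 // gtn_eqF.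
Qed.

End Helpers.

Section OrbitFacts.
Variable T : finType.
Implicit Types (X Y H : {group {perm T}}) (S : {set T}).

Lemma P_act (x : T) (s : {perm T}) : 'P%act x s = s x.
Proof. by rewrite /= apermE. Qed.

Lemma orbit_normal_act X (n : {perm T}) c :
  n \in 'N(X) -> orbit 'P X ('P%act c n) = ('P^*)%act (orbit 'P X c) n.
Proof. by move/normP=> nX; have := setact_orbit (perm_action T) X c n; rewrite nX => e; exact: (esym e). Qed.

Lemma commute_perm (s t : {perm T}) z : commute s t -> s (t z) = t (s z).
Proof. by move=> cst; rewrite -!permM cst. Qed.

Lemma orbit_sub X H c : X \subset H -> orbit 'P X c \subset orbit 'P H c.
Proof. by move=> sXH; apply: imsetS. Qed.

End OrbitFacts.

Section PB.
Variable T : finType.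
Variables (N0 X1 X2 : {group {perm T}}) (b : T) (l1 l2 : nat).
Let B := orbit 'P N0 b.
Hypotheses (pl1 : prime l1) (pl2 : prime l2) (lt12 : l1 < l2)
  (cardB : #|B| = (l1 * l2)%N).

Section OneX.
Variable X : {group {perm T}}.
Hypotheses (sX : X \subset N0) (nX : N0 \subset 'N(X)).

Lemma B_acts : [acts X, on B | 'P].
Proof. by apply: subset_trans sX (acts_orbit _ _ _); rewrite subsetT. Qed.

Lemma orbit_in_B c : c \in B -> orbit 'P X c \subset B.
Proof.
move=> cB; apply/subsetP => z /orbitP [x xX <-].
by apply: orbit_trans cB; rewrite mem_orbit // (subsetP sX).
Qed.

Lemma orbit_size_const c : c \in B -> #|orbit 'P X c| = #|orbit 'P X b|.
Proof.
case/orbitP => n nN0 <-; rewrite orbit_normal_act ?(subsetP nX) //.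
by rewrite card_setact.
Qed.

Definition QX := [set orbit 'P X z | z in B].

Lemma QX_count : (#|QX| * #|orbit 'P X b| = l1 * l2)%N.
Proof.
rewrite -cardB (card_partition (orbit_partition B_acts)) -sum_nat_const.
apply: eq_bigr => O /imsetP [z zB ->]; by rewrite orbit_size_const.
Qed.

Hypothesis decX : N0 \subset X * 'C(X).
Hypothesis fX : 'C_X(B | 'P) = 1.

Lemma FO c k : c \in B -> k \in X -> {in orbit 'P X c, forall z, k z = z} -> k = 1.
Proof.
move=> cB kX fk; suff : k \in 'C_X(B | 'P) by rewrite fX => /set1P.
rewrite inE kX /=.
apply/astabP => y yB.
have yc : y \in orbit 'P N0 c by apply: orbit_trans yB _; rewrite orbit_sym.
case/orbitP: yc => n nN0 <-.
case/mulsgP: (subsetP decX n nN0) => x v xX vC ->.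
rewrite !P_act permM -(commute_perm _ ((centP vC) k kX)).
by rewrite fk // -P_act mem_orbit.
Qed.


Hypothesis dX : (l2 %| #|X|)%N.

Lemma small_orbit c : c \in B -> #|orbit 'P X c| < l2 -> False.
Proof.
move=> cB ltc; have [y yX oy] := Cauchy pl2 dX.
have y1 : y = 1.
  apply: (FO cB yX) => z zO.
  have eO : orbit 'P X z = orbit 'P X c by apply/eqP; rewrite orbit_eq_mem.
  have sub : orbit 'P <[y]> z \subset orbit 'P X c.
    by rewrite -eO; apply: orbit_sub; rewrite cycle_subG.
  have d : (#|orbit 'P <[y]> z| %| l2)%N by rewrite -oy orderE dvdn_orbit.
  have c1 : #|orbit 'P <[y]> z| = 1%N.
    case: (eqVneq #|orbit 'P <[y]> z| 1%N) => // n1.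
    have e := (prime_nt_dvdP pl2 n1 d).
    by move: (leq_ltn_trans (subset_leq_card sub) ltc); rewrite e ltnn.
  have := mem_orbit 'P z (cycle_id y); rewrite (card_orbit1 c1) inE P_act.
  by move/eqP.
by move: (prime_gt1 pl2); rewrite -oy y1 order1.
Qed.

End OneX.

Lemma trans_contra (Y Z : {group {perm T}}) :
  Z \subset N0 -> N0 \subset 'N(Z) -> Z \subset 'C(Y) -> orbit 'P Y b = B ->
  'C_Z(B | 'P) = 1 -> Z^`(1) = Z -> (l2 %| #|Z|)%N -> False.
Proof.
move=> sZ nZ cZY eYB fZ pZ dZ.
have st1 : 'C_Z[b | 'P] = 1.
  apply/eqP; rewrite eqEsubset sub1G andbT; apply/subsetP => y /setIP [yZ /astab1P yb].
  rewrite -fZ inE yZ; apply/astabP => z; rewrite -eYB => /orbitP [x xY <-].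
  rewrite !P_act (commute_perm _ ((centP (subsetP cZY y yZ)) x xY)).
  by rewrite P_act in yb; rewrite yb.
have cZ : #|Z| = #|orbit 'P Z b| by rewrite card_orbit st1 indexg1.
have dv : (#|Z| %| l1 * l2)%N by rewrite -(QX_count sZ nZ) cZ dvdn_mull.
have Z1 : Z :=: 1 by apply: perfect_small pl2 pl1 lt12 _ pZ; rewrite mulnC.
by move: dZ; rewrite Z1 cards1 dvdn1 => /eqP e; move: (prime_gt1 pl2); rewrite e.
Qed.

Lemma nt_l2 e d : (e * d = l1 * l2)%N -> l2 <= d -> e != 1%N -> d = l2.
Proof.
move=> ed le ne1.
have e0 : 0 < e by case: e ed ne1 => //; rewrite mul0n => /esym/eqP; rewrite muln_eq0 -!leqn0 leqNgt prime_gt0 // leqNgt prime_gt0.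
have el1 : e <= l1.
  by rewrite -(@leq_pmul2r l2) ?prime_gt0 // -ed leq_pmul2l.
have cop : coprime e l2.
  rewrite coprime_sym prime_coprime //; apply/negP => /(dvdn_leq e0).
  by rewrite leqNgt (leq_ltn_trans el1 lt12).
have de : (e %| l1)%N by rewrite -(Gauss_dvdl _ cop) -ed dvdn_mulr.
have ee := prime_nt_dvdP pl1 ne1 de.
by apply/eqP; rewrite -(eqn_pmul2l (prime_gt0 pl1)) -{1}ee ed.
Qed.

Hypotheses (sX1 : X1 \subset N0) (sX2 : X2 \subset N0)
  (nX1 : N0 \subset 'N(X1)) (nX2 : N0 \subset 'N(X2))
  (cX12 : X2 \subset 'C(X1)) (dec1 : N0 \subset X1 * 'C(X1)) (dec2 : N0 \subset X2 * 'C(X2))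
  (per1 : X1^`(1) = X1) (per2 : X2^`(1) = X2)
  (f1 : 'C_X1(B | 'P) = 1) (f2 : 'C_X2(B | 'P) = 1)
  (dv1 : (l2 %| #|X1|)%N) (dv2 : (l2 %| #|X2|)%N).

Lemma bB : b \in B. Proof. exact: orbit_refl. Qed.

Lemma orbit_is_l2 (X Y : {group {perm T}}) :
  X \subset N0 -> N0 \subset 'N(X) -> N0 \subset X * 'C(X) -> 'C_X(B | 'P) = 1 ->
  (l2 %| #|X|)%N ->
  Y \subset N0 -> N0 \subset 'N(Y) -> Y \subset 'C(X) -> 'C_Y(B | 'P) = 1 ->
  Y^`(1) = Y -> (l2 %| #|Y|)%N -> #|orbit 'P X b| = l2.
Proof.
move=> sX nX decX fX dX sY nY cYX fY pY dY.
have cnt := QX_count sX nX.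
case: (ltnP #|orbit 'P X b| l2) => [lt | ge].
  by case: (small_orbit decX fX dX bB lt).
case: (eqVneq #|QX X| 1%N) => [e1 | ne1]; last exact: nt_l2 cnt ge ne1.
exfalso; apply: (trans_contra sY nY cYX _ fY pY dY).
apply/eqP; rewrite eqEcard (orbit_in_B sX bB) cardB -cnt e1 mul1n leqnn.
by rewrite andbT.
Qed.

Lemma PB_false : False.
Proof.
have cX21 : X1 \subset 'C(X2) by rewrite centsC.
have o1 := orbit_is_l2 sX1 nX1 dec1 f1 dv1 sX2 nX2 cX12 f2 per2 dv2.
have o2 := orbit_is_l2 sX2 nX2 dec2 f2 dv2 sX1 nX1 cX21 f1 per1 dv1.
have e1 : #|QX X1| = l1.
  by apply/eqP; rewrite -(eqn_pmul2r (prime_gt0 pl2)) -{1}o1 (QX_count sX1 nX1).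
case: (boolP [forall c in B, orbit 'P X2 c \subset orbit 'P X1 c]) => [/forall_inP all | ].
  have st1 : 'C_X2[b | 'P] = 1.
    apply/eqP; rewrite eqEsubset sub1G andbT; apply/subsetP => y /setIP [yX /astab1P yb].
    apply/set1P; apply: (FO dec2 f2 bB yX) => z zO.
    have /orbitP [x xX <-] := subsetP (all b bB) z zO.
    rewrite !P_act (commute_perm _ ((centP (subsetP cX12 y yX)) x xX)).
    by rewrite P_act in yb; rewrite yb.
  have cZ : #|X2| = l2 by rewrite -o2 card_orbit st1 indexg1.
  have ab : abelian X2 by apply: (abelian_dvd_prime pl2); rewrite cZ.
  have Z1 := perfect_triv_abelian per2 ab.
  by move: (prime_gt1 pl2); rewrite -cZ Z1 cards1.
rewrite negb_forall_in => /existsP [c /andP [cB /subsetPn [z zO2 zO1]]].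
set O := orbit 'P X1 c in zO1.
have [y yX2 yz] := orbitP zO2.
have sub : 'C_X2[c | 'P] \subset 'N_X2(O | 'P).
  apply/subsetP => x /setIP [xX /astab1P xc]; rewrite inE xX; apply/astabsP => w.
  have xN : x \in 'N(X1) by apply: (subsetP (cent_sub X1)); apply: (subsetP cX12).
  by have := orbit_conjsg 'P X1 x c w; rewrite (normP xN) xc.
have i1 : #|X2 : 'C_X2[c | 'P]| = l2 by rewrite -card_orbit (orbit_size_const nX2 cB).
have i2 : (#|X2 : 'N_X2(O | 'P)| %| l2)%N by rewrite -i1; apply: indexgS.
have i3 : #|orbit 'P^* X2 O| = #|X2 : 'N_X2(O | 'P)|.
  by rewrite card_orbit astab1_set.
have i4 : orbit 'P^* X2 O \subset QX X1.
  apply/subsetP => W /orbitP [x xX <-]; rewrite -orbit_normal_act; last first.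
    by apply: (subsetP nX1); apply: (subsetP sX2).
  rewrite /QX; apply: imset_f; apply: orbit_trans cB; rewrite mem_orbit //.
  exact: (subsetP sX2).
have le := subset_leq_card i4; rewrite e1 i3 in le.
have ie1 : #|X2 : 'N_X2(O | 'P)| = 1%N.
  case: (eqVneq #|X2 : 'N_X2(O | 'P)| 1%N) => // n1.
  by move: le; rewrite (prime_nt_dvdP pl2 n1 i2) leqNgt lt12.
have sN : X2 \subset 'N_X2(O | 'P) by rewrite -indexg_eq1 ie1.
have /setIP [_ /astabsP yN] := subsetP sN y yX2.
by have := yN c; rewrite yz (negbTE zO1) orbit_refl.
Qed.

End PB.

Section Conj.
Variable T : finType.
Variables (G N0 Tm : {group {perm T}}).
Hypotheses (nN0G : G \subset 'N(N0)) (minT : minnormal Tm N0) (sTN : Tm \subset N0).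

Let cs := class_support Tm G.

Lemma Tm_ne1 : Tm :!=: 1.
Proof. by case/mingroupP: minT => /andP []. Qed.

Lemma Tm_norm : N0 \subset 'N(Tm).
Proof. by case/mingroupP: minT => /andP []. Qed.

Lemma conj_sub g : g \in G -> Tm :^ g \subset N0.
Proof. by move=> gG; rewrite -(normP (subsetP nN0G g gG)) conjSg. Qed.

Lemma conj_norm g : g \in G -> N0 \subset 'N(Tm :^ g).
Proof.
by move=> gG; rewrite normJ -{1}(normP (subsetP nN0G g gG)) conjSg Tm_norm.
Qed.

Lemma conj_ne1 g : Tm :^ g != 1.
Proof. by rewrite conjsg_eq1 Tm_ne1. Qed.

Lemma conj_min g : g \in G -> forall Y : {group {perm T}},
  Y :!=: 1 -> N0 \subset 'N(Y) -> Y \subset Tm :^ g -> Y :=: Tm :^ g.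
Proof.
move=> gG Y ntY nY sY.
have [_ minP] := mingroupP minT.
have giG : g^-1 \in G by rewrite groupV.
have nY' : N0 \subset 'N(Y :^ g^-1).
  by rewrite normJ -{1}(normP (subsetP nN0G _ giG)) conjSg.
have := minP (Y :^ g^-1)%G; rewrite /= sub_conjgV sY conjsg_eq1 ntY nY' => /(_ isT isT) e.
by rewrite -e /= conjsgKV.
Qed.

Lemma conj_comm g h : g \in G -> h \in G -> Tm :^ g != Tm :^ h ->
  Tm :^ g \subset 'C(Tm :^ h).
Proof.
move=> gG hG ne.
have I1 : (Tm :^ g) :&: (Tm :^ h) = 1.
  apply/eqP; case: (eqVneq ((Tm :^ g) :&: (Tm :^ h)) 1) => // ntI.
  have eI := @conj_min g gG ((Tm :^ g) :&: (Tm :^ h))%G ntI (normsI (conj_norm gG) (conj_norm hG)) (subsetIl _ _).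
  have sgh : Tm :^ g \subset Tm :^ h by rewrite -eI subsetIr.
  have := conj_min hG (conj_ne1 g) (conj_norm gG) sgh.
  by move=> e; rewrite e eqxx in ne.
apply/commG1P; apply/trivgP; rewrite -I1; apply: commg_subI.
  by rewrite subsetI subxx (subset_trans (conj_sub gG) (conj_norm hG)).
by rewrite subsetI subxx (subset_trans (conj_sub hG) (conj_norm gG)).
Qed.

Lemma conj_card g : #|Tm :^ g| = #|Tm|.
Proof. exact: cardJg. Qed.

Hypothesis eN0 : N0 :=: <<cs>>.

Lemma conj_dec g : g \in G -> N0 \subset (Tm :^ g) * 'C(Tm :^ g).
Proof.
move=> gG; rewrite -norm_joinEl; last by rewrite norms_cent ?normG.
rewrite eN0 gen_subG /cs class_supportEr; apply/bigcupsP => h hG.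
case: (eqVneq (Tm :^ h) (Tm :^ g)) => [-> | ne]; first exact: joing_subl.
by apply: subset_trans (conj_comm hG gG ne) (joing_subr _ _).
Qed.

Lemma conj_faith g (C : {set T}) : g \in G -> N0 \subset 'N(C | 'P) ->
  ~~ (Tm :^ g \subset 'C(C | 'P)) -> 'C_(Tm :^ g)(C | 'P) = 1.
Proof.
move=> gG nC ntr; apply/eqP.
case: (eqVneq ('C_(Tm :^ g)(C | 'P)) 1) => // ntI.
have nI : N0 \subset 'N('C_(Tm :^ g)(C | 'P)).
  by apply: normsI (conj_norm gG) (subset_trans nC (astab_norm _ _)).
have := @conj_min g gG ('C_(Tm :^ g)(C | 'P))%G ntI nI (subsetIl _ _) => e.
by move: ntr; rewrite -e subsetIr.
Qed.

Lemma conj_prime_dvd l : prime l -> (l %| #|N0|)%N -> (l %| #|Tm|)%N.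
Proof.
move=> pl; apply: contraLR => ndT.
rewrite -p'natE // -/(pgroup _ N0).
apply: pgroupS (pcore_pgroup (l^') N0).
rewrite {1}eN0 gen_subG /cs class_supportEr; apply/bigcupsP => h hG.
apply: pcore_max; first by rewrite /pgroup p'natE // cardJg ndT.
by apply/andP; split; [exact: conj_sub | exact: conj_norm].
Qed.

Hypothesis ncN0 : ~~ abelian N0.

Lemma conj_perfect g : g \in G -> (Tm :^ g)^`(1) = Tm :^ g.
Proof.
move=> gG; have -> : (Tm :^ g)^`(1) = Tm^`(1) :^ g by apply: (derJ Tm 1 g).
suff -> : Tm^`(1) = Tm by [].
have nD : N0 \subset 'N(Tm^`(1)) := char_norm_trans (der_char 1 Tm) Tm_norm.
case: (eqVneq (Tm^`(1)) 1) => [D1 | ntD].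
  exfalso; move/negP: ncN0; apply; rewrite eN0 abelian_gen.
  have abT : abelian Tm by apply/derG1P.
  rewrite /cs class_supportEr; apply/bigcupsP => g1 g1G.
  apply/centsP => x xT y /bigcupP [g2 g2G yT].
  case: (eqVneq (Tm :^ g1) (Tm :^ g2)) => [e | ne].
    have abg : abelian (Tm :^ g1) by rewrite abelianJ.
    by apply: (centsP abg) => //; rewrite e.
  exact: (centsP (conj_comm g1G g2G ne)).
have [_ minP] := mingroupP minT.
by rewrite (minP (Tm^`(1))%G) //= ?der_sub // ntD nD.
Qed.

End Conj.

Section Main.
Variable T : finType.
Variables (G N0 : {group {perm T}}) (l1 l2 : nat).
Hypotheses (nN0G : N0 <| G) (minN0 : minnormal N0 G)
  (pl1 : prime l1) (pl2 : prime l2) (lt12 : l1 < l2)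
  (cardO : forall x, #|orbit 'P N0 x| = (l1 * l2)%N)
  (trG : [transitive G, on [set: T] | 'P]).

Definition Om := [set orbit 'P N0 x | x : T].
Hypothesis mprime : prime #|Om|.
Variable a0 : T.
Hypothesis hK : 'C_N0(orbit 'P N0 a0 | 'P) != 1.

Let nN0 : G \subset 'N(N0) := normal_norm nN0G.

Lemma N0_ne1 : N0 :!=: 1.
Proof. by case/mingroupP: minN0 => /andP []. Qed.

Lemma N0_nonab : ~~ abelian N0.
Proof.
apply/negP => abN.
have [_ _ /is_abelemP [l pl /abelem_pgroup lN]] :=
  minnormal_solvable minN0 (subxx N0) (abelian_sol abN).
have d : (l1 * l2 %| #|N0|)%N by rewrite -(cardO a0) dvdn_orbit.
have lnat := pnat_dvd d lN.
have mem1 : l1 \in \pi(l1 * l2)%N.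
  by rewrite mem_primes pl1 muln_gt0 !prime_gt0 // dvdn_mulr.
have mem2 : l2 \in \pi(l1 * l2)%N.
  by rewrite mem_primes pl2 muln_gt0 !prime_gt0 // dvdn_mull.
have := pnatPpi lnat mem1; have := pnatPpi lnat mem2.
rewrite !inE => /eqP e2 /eqP e1.
by move: lt12; rewrite e1 e2 ltnn.
Qed.

Lemma blk_acts x : N0 \subset 'N(orbit 'P N0 x | 'P).
Proof. exact: (acts_orbit _ _ (subsetT N0)). Qed.

Lemma blk_conj x h : h \in G -> ('P^*)%act (orbit 'P N0 x) h = orbit 'P N0 (h x).
Proof. by move=> hG; rewrite -orbit_normal_act ?(subsetP nN0) // P_act. Qed.

Lemma nt_conj (X : {set {perm T}}) (C : {set T}) h :
  (X :^ h \subset 'C(('P^*)%act C h | 'P)) = (X \subset 'C(C | 'P)).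
Proof. by rewrite astab_setact conjSg. Qed.

Lemma dvN (x : T) : (l2 %| #|N0|)%N.
Proof. by apply: dvdn_trans (dvdn_orbit 'P N0 x); rewrite cardO dvdn_mull. Qed.

Section WithT.
Variable Tm : {group {perm T}}.
Hypotheses (minT : minnormal Tm N0) (sTN : Tm \subset N0).

Let cs := class_support Tm G.

Lemma eN0 : N0 :=: <<cs>>.
Proof.
have [_ minP] := mingroupP minN0.
have s1 : <<cs>> \subset N0 by rewrite gen_subG class_support_sub_norm.
have n1 : G \subset 'N(<<cs>>) by apply: subset_trans (class_support_norm Tm G) (norm_gen _).
have nt1 : <<cs>> != 1 :> {set _}.
  apply/negP => /eqP e1; move: (Tm_ne1 minT); apply/negP; rewrite negbK -subG1 -e1.
  exact: subset_trans (sub_class_support G Tm) (sub_gen _).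
have := minP (<<cs>>)%G; rewrite /= nt1 n1 s1 => /(_ isT isT) e.
by rewrite -e.
Qed.

Let eN := eN0.

Lemma uniq_nt x g1 g2 : g1 \in G -> g2 \in G ->
  ~~ (Tm :^ g1 \subset 'C(orbit 'P N0 x | 'P)) ->
  ~~ (Tm :^ g2 \subset 'C(orbit 'P N0 x | 'P)) -> Tm :^ g1 = Tm :^ g2.
Proof.
move=> g1G g2G nt1 nt2; apply/eqP; apply/negP => /negP ne.
have dT := conj_prime_dvd nN0 minT sTN eN pl2 (dvN x).
have ne' : Tm :^ g2 != Tm :^ g1 by rewrite eq_sym.
apply: (PB_false pl1 pl2 lt12 (cardO x) (conj_sub nN0 sTN g1G) (conj_sub nN0 sTN g2G)
  (conj_norm nN0 minT g1G) (conj_norm nN0 minT g2G) (conj_comm nN0 minT sTN g2G g1G ne')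
  (conj_dec nN0 minT sTN eN g1G) (conj_dec nN0 minT sTN eN g2G)
  (conj_perfect nN0 minT sTN eN N0_nonab g1G) (conj_perfect nN0 minT sTN eN N0_nonab g2G)
  (conj_faith nN0 minT g1G (blk_acts x) nt1) (conj_faith nN0 minT g2G (blk_acts x) nt2) _ _);
  by rewrite cardJg.
Qed.

Lemma N0_sub_bigcup (S : {set {perm T}}) :
  (forall g, g \in G -> Tm :^ g \subset S) -> N0 \subset <<S>>.
Proof.
move=> hS; rewrite {1}eN genS // /cs class_supportEr; apply/bigcupsP => g gG.
exact: hS.
Qed.

Lemma exists_nt x : exists2 g, g \in G & ~~ (Tm :^ g \subset 'C(orbit 'P N0 x | 'P)).
Proof.
case: (boolP [exists g, (g \in G) && ~~ (Tm :^ g \subset 'C(orbit 'P N0 x | 'P))]).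
  by case/existsP => g /andP [gG nt]; exists g.
rewrite negb_exists => /forallP all; exfalso.
have sN : N0 \subset 'C(orbit 'P N0 x | 'P).
  rewrite -(genGid ('C(orbit 'P N0 x | 'P))%G) /=; apply: N0_sub_bigcup => g gG.
  by have := all g; rewrite gG /= negbK.
have sub : orbit 'P N0 x \subset [set x].
  apply/subsetP => y /orbitP [n nN <-]; rewrite inE.
  by rewrite (astabP (subsetP sN n nN)) ?orbit_refl.
have := subset_leq_card sub; rewrite cards1 cardO leqNgt.
by rewrite (leq_trans (prime_gt1 pl2)) // leq_pmull // prime_gt0.
Qed.

Lemma conj_nt_some g : exists x, ~~ (Tm :^ g \subset 'C(orbit 'P N0 x | 'P)).
Proof.
case: (boolP [exists x, ~~ (Tm :^ g \subset 'C(orbit 'P N0 x | 'P))]).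
  by case/existsP => x nt; exists x.
rewrite negb_exists => /forallP all; exfalso.
move: (conj_ne1 minT g); apply/negP; rewrite negbK -subG1; apply/subsetP => y yT.
rewrite inE; apply/eqP/permP => x; rewrite perm1.
have := all x; rewrite negbK => s.
by have := astabP (subsetP s y yT) x (orbit_refl _ _ _); rewrite P_act.
Qed.


Lemma GT a b b' : orbit 'P N0 a != orbit 'P N0 b -> b' \in orbit 'P N0 b ->
  exists2 k, k \in 'C_N0(orbit 'P N0 a | 'P) & k b = b'.
Proof.
move=> neAB b'B.
set A0 := orbit 'P N0 a0.
have [g0 g0G nt0] := exists_nt a0.
set X0 := Tm :^ g0.
set Sup := [set C in Om | ~~ (X0 \subset 'C(C | 'P))].
set J := 'N_G(Sup | 'P^*).
have A0Om : A0 \in Om by apply: imset_f.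
have A0Sup : A0 \in Sup by rewrite inE A0Om.
have OmG : forall C, C \in Om -> exists2 h, h \in G & C = ('P^*)%act A0 h.
  move=> C /imsetP [x _ ->].
  have [h hG hx] := atransP2 trG (in_setT a0) (in_setT x).
  by exists h => //; rewrite blk_conj // -P_act -hx.
have OmP : forall C h, h \in G -> C \in Om -> ('P^*)%act C h \in Om.
  by move=> C h hG /imsetP [x _ ->]; rewrite blk_conj // imset_f.
have OmPV : forall C h, h \in G -> (('P^*)%act C h \in Om) = (C \in Om).
  move=> C h hG; apply/idP/idP; last exact: OmP.
  by move/(OmP _ h^-1); rewrite groupV actK; apply.
have key : forall h, h \in G -> ('P^*)%act A0 h \in Sup -> h \in J.
  move=> h hG; rewrite inE => /andP [_ ntA].
  have e : X0 :^ h = X0.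
    rewrite /X0 -conjsgM; apply: (uniq_nt (x := h a0)); rewrite ?groupM //.
      by rewrite conjsgM -blk_conj // nt_conj.
    by rewrite -blk_conj.
  rewrite inE hG; apply/astabsP => C; rewrite !inE OmPV //.
  by rewrite -{1}e nt_conj.
have GA0J : 'C_G[A0 | 'P^*] \subset J.
  apply/subsetP => h /setIP [hG /astab1P hA]; apply: key => //.
  by rewrite hA.
have sJG : J \subset G by apply: subsetIl.
have orbJ : orbit 'P^* J A0 = Sup.
  apply/eqP; rewrite eqEsubset; apply/andP; split.
    apply/subsetP => C /orbitP [h /setIP [hG /astabsP hS] <-].
    by rewrite hS.
  apply/subsetP => C CS; have CO : C \in Om by move: CS; rewrite inE => /andP [].
  have [h hG eC] := OmG C CO; rewrite eC; apply: mem_orbit; apply: key => //.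
  by rewrite -eC.
have orbG : orbit 'P^* G A0 = Om.
  apply/eqP; rewrite eqEsubset; apply/andP; split.
    by apply/subsetP => C /orbitP [h hG <-]; apply: OmP.
  by apply/subsetP => C CO; have [h hG ->] := OmG C CO; apply: mem_orbit.
have divm : (#|Sup| %| #|Om|)%N.
  rewrite -orbJ -orbG !card_orbit.
  have eJ : 'C_J[A0 | 'P^*] = 'C_G[A0 | 'P^*].
    apply/eqP; rewrite eqEsubset; apply/andP; split.
      by apply: setSI.
    by rewrite subsetI GA0J subsetIr.
  by rewrite eJ -(Lagrange_index sJG GA0J) dvdn_mull.
have SOm : Sup \subset Om by apply/subsetP => C; rewrite inE => /andP [].
case: (eqVneq #|Sup| 1%N) => [S1 | Sn1]; last first.
  have eS : #|Sup| = #|Om| := prime_nt_dvdP mprime Sn1 divm.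
  have SeqOm : Sup = Om by apply/eqP; rewrite eqEcard SOm eS leqnn.
  exfalso; move/negP: hK; apply; rewrite -subG1.
  have allX0 : forall g, g \in G -> Tm :^ g \subset X0.
    move=> g gG; have [x ntx] := conj_nt_some g.
    have : orbit 'P N0 x \in Sup by rewrite SeqOm imset_f.
    by rewrite inE => /andP [_ nt0x]; rewrite (uniq_nt gG g0G ntx nt0x).
  have sNX : N0 \subset X0.
    by rewrite /X0 -(genGid (Tm :^ g0)%G); apply: N0_sub_bigcup.
  rewrite -(conj_faith nN0 minT g0G (blk_acts a0) nt0).
  by apply: setSI.
have /cards1P [S0 eS0] : #|Sup| == 1%N by rewrite S1.
have SA0 : forall C, C \in Sup -> C = A0.
  move=> C; rewrite eS0 => /set1P ->; by move: A0Sup; rewrite eS0 => /set1P.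
have BOm : orbit 'P N0 b \in Om by apply: imset_f.
have [h hG eB] := OmG _ BOm.
have gh : g0 * h \in G by rewrite groupM.
set XB := Tm :^ (g0 * h).
have ntB : ~~ (XB \subset 'C(orbit 'P N0 b | 'P)) by rewrite /XB conjsgM eB nt_conj.
have trA : XB \subset 'C(orbit 'P N0 a | 'P).
  apply/negPn/negP => ntA.
  have AOm : orbit 'P N0 a \in Om by apply: imset_f.
  have : ('P^*)%act (orbit 'P N0 a) h^-1 \in Sup.
    rewrite inE OmPV ?groupV // AOm /= -(nt_conj X0 _ h) actKV /X0 -conjsgM.
    exact: ntA.
  move/SA0 => e; move/negP: neAB; apply; apply/eqP.
  by rewrite eB -e actKV.
have others : forall g, g \in G -> Tm :^ g \subset XB :|: 'C(orbit 'P N0 b | 'P).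
  move=> g gG; case: (boolP (Tm :^ g \subset 'C(orbit 'P N0 b | 'P))) => [s | nt].
    by rewrite subsetU // s orbT.
  by rewrite (uniq_nt gG gh nt ntB) subsetUl.
have sXN : XB \subset N0 := conj_sub nN0 sTN gh.
have nXB : XB \subset 'N('C(orbit 'P N0 b | 'P)).
  exact: subset_trans sXN (subset_trans (blk_acts b) (astab_norm _ _)).
have sN : N0 \subset XB * 'C(orbit 'P N0 b | 'P).
  by rewrite -norm_joinEl //; apply: N0_sub_bigcup others.
case/orbitP: b'B => n nN <-.
case/mulsgP: (subsetP sN n nN) => x k xX kC ->.
have xN := subsetP sXN x xX.
exists x; first by rewrite inE xN (subsetP trA x xX).
have xbB : x b \in orbit 'P N0 b by rewrite -P_act mem_orbit.
by rewrite P_act permM; have := astabP kC _ xbB; rewrite P_act.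
Qed.
End WithT.
Lemma GT_main a b b' : orbit 'P N0 a != orbit 'P N0 b -> b' \in orbit 'P N0 b ->
  exists2 k, k \in 'C_N0(orbit 'P N0 a | 'P) & k b = b'.
Proof.
have [Tm minT sTN] := minnormal_exists N0_ne1 (normG N0).
exact: (GT minT sTN).
Qed.

End Main.

Lemma cross_path (T : finType) (e : rel T) (P : pred T) x y :
  connect e x y -> P x -> ~~ P y -> exists u v, [/\ P u, ~~ P v & e u v].
Proof.
case/connectP => p; elim: p x => [|z p IH] x /=.
  by move=> _ -> Px nPy; rewrite Px in nPy.
case/andP => exz pz ly Px nPy; case: (boolP (P z)) => Pz.
  exact: IH pz ly Pz nPy.
by exists x, z.
Qed.

Lemma path_iota (T : Type) (R : rel T) (g : nat -> T) k : forall m,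
  (forall t, m <= t -> t < m + k -> R (g t) (g t.+1)) ->
  path R (g m) [seq g t | t <- iota m.+1 k] /\ last (g m) [seq g t | t <- iota m.+1 k] = g (m + k).
Proof.
elim: k => [|k IH] m H /=; first by rewrite addn0.
have H' : forall t, m.+1 <= t -> t < m.+1 + k -> R (g t) (g t.+1).
  by move=> t h1 h2; apply: H; [exact: ltnW | rewrite addnS].
have [p l] := IH m.+1 H'.
by rewrite H ?leqnn ?addnS ?ltnS ?leq_addr // p l addSnnS.
Qed.

Lemma cycle_iota (T : Type) (R : rel T) (g : nat -> T) n : 0 < n ->
  (forall t, t < n -> R (g t) (g (t.+1 %% n))) -> path.cycle R [seq g t | t <- iota 0 n].
Proof.
case: n => // n _ H; rewrite /= rcons_path.
have H' : forall t, 0 <= t -> t < 0 + n -> R (g t) (g t.+1).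
  by move=> t _ h; have := H t (ltnW h); rewrite modn_small.
have [p l] := @path_iota T R g n 0 H'.
by rewrite p l /=; have := H n (ltnSn n); rewrite modnn.
Qed.

Lemma Tcard (T : finType) (N0 : {group {perm T}}) r :
  (forall x, #|orbit 'P N0 x| = r) -> #|T| = (#|Om N0| * r)%N.
Proof.
move=> cardO.
have ac : [acts N0, on [set: T] | 'P] by apply/actsP => n _ x; rewrite !inE.
have := card_partition (orbit_partition ac); rewrite cardsT => ->.
have -> : [set orbit 'P N0 x | x in [set: T]] = Om N0.
  by apply/setP => C; apply/imsetP/imsetP => [[x _ ->]|[x _ ->]]; exists x.
by rewrite -sum_nat_const; apply: eq_bigr => C /imsetP [x _ ->].
Qed.

Section Ham.
Variables (T : finType) (e : rel T) (G N0 : {group {perm T}}) (r : nat).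
Hypotheses (sGA : G \subset autg e) (nN0 : G \subset 'N(N0))
  (trG : [transitive G, on [set: T] | 'P]) (conn : connected_graph e)
  (cardO : forall x, #|orbit 'P N0 x| = r)
  (mprime : prime #|Om N0|)
  (cb : forall a b a' b', orbit 'P N0 a != orbit 'P N0 b -> e a b ->
     a' \in orbit 'P N0 a -> b' \in orbit 'P N0 b -> e a' b').

Let m := #|Om N0|.

Lemma aut_e g x y : g \in G -> e (g x) (g y) = e x y.
Proof.
by move=> gG; have := subsetP sGA g gG; rewrite inE => /forallP/(_ x)/forallP/(_ y)/eqP.
Qed.

Lemma blkC x h : h \in G -> ('P^*)%act (orbit 'P N0 x) h = orbit 'P N0 (h x).
Proof. by move=> hG; rewrite -orbit_normal_act ?(subsetP nN0) // P_act. Qed.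

Lemma OmP' C h : h \in G -> C \in Om N0 -> ('P^*)%act C h \in Om N0.
Proof. by move=> hG /imsetP [x _ ->]; rewrite blkC // imset_f. Qed.

Lemma orbG A : A \in Om N0 -> orbit 'P^* G A = Om N0.
Proof.
move=> /imsetP [a _ ->]; apply/eqP; rewrite eqEsubset; apply/andP; split.
  by apply/subsetP => C /orbitP [h hG <-]; apply: OmP' => //; apply: imset_f.
apply/subsetP => C /imsetP [x _ ->].
have [h hG hx] := atransP2 trG (in_setT a) (in_setT x).
by rewrite hx P_act -blkC // mem_orbit.
Qed.

Lemma m_orbit (Q : {group {perm T}}) A : Q \subset G -> (m.-group Q) -> A \in Om N0 ->
  (exists2 x, x \in Q & ('P^*)%act A x != A) -> orbit 'P^* Q A = Om N0.
Proof.
move=> sQG mQ AO [x xQ nx].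
have sub : orbit 'P^* Q A \subset Om N0.
  by apply/subsetP => C /orbitP [h hQ <-]; apply: OmP' => //; apply: (subsetP sQG).
have d1 : 1 < #|orbit 'P^* Q A|.
  have s2 : [set A; ('P^*)%act A x] \subset orbit 'P^* Q A.
    by apply/subsetP => C; rewrite !inE => /orP [] /eqP ->; [apply: orbit_refl | apply: mem_orbit].
  by apply: leq_trans (subset_leq_card s2); rewrite cards2 eq_sym nx.
have mn : m.-nat #|orbit 'P^* Q A| := pnat_dvd (dvdn_orbit _ _ _) mQ.
have pd := pnatPpi mn (etrans (pi_pdiv _) d1); rewrite inE in pd.
have md : (m %| #|orbit 'P^* Q A|)%N by rewrite -(eqP pd) pdiv_dvd.
apply/eqP; rewrite eqEcard sub /=.
exact: dvdn_leq (ltnW d1) md.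
Qed.

Lemma sylow_w A C : A \in Om N0 -> C \in Om N0 -> A != C ->
  exists2 w, w \in G & ('P^*)%act A w = C /\ orbit 'P^* <[w]> A = Om N0.
Proof.
move=> AO CO nAC.
have [P sylP] := Sylow_exists m G.
have sPG := pHall_sub sylP.
have mP : m.-group P by case/and3P: sylP.
have [x xP nx] : exists2 x, x \in P & ('P^*)%act A x != A.
  case: (boolP (P \subset 'C_G[A | 'P^*])) => [sPA | /subsetPn [x xP nx]]; last first.
    exists x => //; apply: contra nx => /eqP ex.
    by rewrite inE (subsetP sPG) //=; apply/astab1P.
  exfalso.
  have i1 := Lagrange_index (subsetIl G 'C[A | 'P^*]) sPA.
  have := card_orbit 'P^* G A; rewrite (orbG AO) -/m => im.
  have : (m %| #|G : P|)%N by rewrite -i1 -im dvdn_mulr.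
  have : (m^').-nat #|G : P| by case/and3P: sylP.
  by rewrite p'natE // => /negP.
have oP := m_orbit sPG mP AO (ex_intro2 _ _ x xP nx).
have : C \in orbit 'P^* P A by rewrite oP.
case/orbitP => w wP eC; exists w; first exact: (subsetP sPG).
split => //; apply: m_orbit AO _.
- by rewrite cycle_subG (subsetP sPG).
- by apply: pgroupS mP; rewrite cycle_subG.
- by exists w; rewrite ?cycle_id // eC eq_sym.
Qed.


Lemma ham : hamiltonian e.
Proof.
have m1 : 1 < m := prime_gt1 mprime.
have [C0 C0O] : exists C, C \in Om N0 by apply/card_gt0P; rewrite -/m ltnW.
case/imsetP: C0O => a _ eC0.
have [y ny] : exists y, y \notin orbit 'P N0 a.
  case: (boolP [exists y, y \notin orbit 'P N0 a]) => [/existsP // | ].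
  rewrite negb_exists => /forallP ally; exfalso.
  have : Om N0 \subset [set orbit 'P N0 a].
    apply/subsetP => C /imsetP [x _ ->]; rewrite inE orbit_eq_mem.
    by have := ally x; rewrite negbK.
  by move/subset_leq_card; rewrite cards1 leqNgt -/m m1.
have [u [v [uA vA euv]]] := cross_path (P := mem (orbit 'P N0 a)) (conn a y) (orbit_refl _ _ _) ny.
have uA' : u \in orbit 'P N0 a := uA.
have vA' : v \notin orbit 'P N0 a := vA.
have eA : orbit 'P N0 u = orbit 'P N0 a by apply/eqP; rewrite orbit_eq_mem.
have nAC : orbit 'P N0 u != orbit 'P N0 v.
  apply: contra vA' => /eqP eAC; by rewrite -eA eAC orbit_refl.
set A := orbit 'P N0 u in nAC eA.
have AO : A \in Om N0 by apply: imset_f.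
have CO : orbit 'P N0 v \in Om N0 by apply: imset_f.
have [w wG [eAw oW]] := sylow_w AO CO nAC.
set f := fun S : {set T} => ('P^*)%act S w.
have finj : injective f := act_inj _ w.
set l := fingraph.order f A.
set bl := fingraph.orbit f A.
have iterE : forall k, iter k f A = ('P^*)%act A (w ^+ k) by move=> k; rewrite actX.
have CbO : forall k, iter k f A \in Om N0 by move=> k; rewrite iterE OmP' // groupX.
have blOm : forall C', (C' \in bl) = (C' \in Om N0).
  move=> C'; apply/idP/idP.
    by rewrite -fconnect_orbit => /iter_findex <-; apply: CbO.
  rewrite -oW => /orbitP [x /cycleP [i ->] <-].
  by rewrite -fconnect_orbit -iterE; apply: fconnect_iter.
have ul : uniq bl := orbit_uniq f A.
have lm : l = m.
  rewrite /l -size_orbit -/bl -(card_uniqP ul) /m; apply: eq_card => C'.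
  by rewrite /= blOm.
have l0 : 0 < l by rewrite lm prime_gt0.
have il : iter l f A = A := iter_order finj A.
have per : forall k, iter k f A = iter (k %% l) f A.
  move=> k; rewrite {1}(divn_eq k l) addnC iterD.
  suff -> : iter (k %/ l * l) f A = A by [].
  by elim: (k %/ l) => [|q IH] //; rewrite mulSn iterD IH il.
have adj : forall j x y, x \in iter j f A -> y \in iter j.+1 f A -> e x y.
  elim=> [|j IH] x1 y1.
    move=> xA yC; rewrite /= /f eAw in yC.
    exact: (cb nAC euv).
  rewrite [iter j.+1 f A]/= [iter j.+2 f A]/= /f /setact => /imsetP [x0 x0in ->] /imsetP [y0 y0in ->].
  rewrite !P_act aut_e //; exact: IH.
have cardC : forall k, #|iter k f A| = r.
  by move=> k; case/imsetP: (CbO k) => x _ ->; apply: cardO.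
have r0 : 0 < r by rewrite -(cardO a); apply/card_gt0P; exists a; apply: orbit_refl.
set n := (l * r)%N.
have n0 : 0 < n by rewrite muln_gt0 l0 r0.
set gv := fun t => nth a (enum (iter (t %% l) f A)) (t %/ l).
have ltr : forall t, t < n -> t %/ l < r by move=> t tn; rewrite ltn_divLR // mulnC.
have gin : forall t, t < n -> gv t \in iter (t %% l) f A.
  move=> t tn; rewrite /gv -mem_enum; apply: mem_nth.
  by rewrite -cardE cardC ltr.
have blk_eq : forall j1 j2 z, z \in iter j1 f A -> z \in iter j2 f A -> iter j1 f A = iter j2 f A.
  move=> j1 j2 z; case/imsetP: (CbO j1) => c1 _ ->; case/imsetP: (CbO j2) => c2 _ ->.
  move=> z1 z2; apply/eqP; rewrite orbit_eq_mem.
  by apply: orbit_trans z2; rewrite orbit_sym.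
exists [seq gv t | t <- iota 0 n]; split.
- rewrite map_inj_in_uniq ?iota_uniq // => t1 t2; rewrite !mem_iota /= !add0n => t1n t2n eg.
  have j_eq : t1 %% l = t2 %% l.
    have B1 := gin t1 t1n; have B2 := gin t2 t2n; rewrite eg in B1.
    have eb := blk_eq _ _ _ B1 B2.
    have sb : size bl = l by rewrite size_orbit.
    apply/eqP; rewrite -(nth_uniq A (_ : t1 %% l < size bl) _ ul) ?sb ?ltn_pmod //.
    by rewrite /bl /fingraph.orbit !nth_traject ?ltn_pmod // eb.
  have i_eq : t1 %/ l = t2 %/ l.
    move: eg; rewrite /gv j_eq => /eqP; rewrite nth_uniq ?enum_uniq ?(eqP _) //.
    + by move/eqP.
    + by rewrite -cardE cardC ltr.
    + by rewrite -cardE cardC ltr.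
  by rewrite (divn_eq t1 l) (divn_eq t2 l) i_eq j_eq.
- by rewrite size_map size_iota /n lm (Tcard cardO).
have cyc := @cycle_iota T e gv n n0; apply: cyc => t tn.
have H1 := gin t tn.
have H2 := gin _ (ltn_pmod t.+1 n0).
rewrite modn_dvdm ?dvdn_mulr // in H2.
have e1 : (t %% l).+1 %% l = t.+1 %% l by rewrite -addn1 modnDml addn1.
rewrite -e1 -per in H2.
exact: adj H1 H2.
Qed.
End Ham.

Lemma final_core (T : finType) (e : rel T) (G N0 : {group {perm T}}) (l1 l2 : nat) :
  prime l1 -> prime l2 -> l1 < l2 -> connected_graph e ->
  G \subset autg e -> [transitive G, on [set: T] | 'P] -> N0 <| G -> minnormal N0 G ->
  (forall x, #|orbit 'P N0 x| = (l1 * l2)%N) -> prime #|Om N0| ->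
  (exists a0, 'C_N0(orbit 'P N0 a0 | 'P) != 1) ->
  (forall a b a' b', orbit 'P N0 a != orbit 'P N0 b -> e a b ->
     a' \in orbit 'P N0 a -> b' \in orbit 'P N0 b -> e a' b') /\ hamiltonian e.
Proof.
move=> pl1 pl2 lt12 conn sGA trG nN0G minN0 cardO mprime [a0 hK].
have aut : forall g x y, g \in G -> e (g x) (g y) = e x y.
  by move=> g x y gG; have := subsetP sGA g gG; rewrite inE => /forallP/(_ x)/forallP/(_ y)/eqP.
have sN0G : N0 \subset G := normal_sub nN0G.
have cb : forall a b a' b', orbit 'P N0 a != orbit 'P N0 b -> e a b ->
     a' \in orbit 'P N0 a -> b' \in orbit 'P N0 b -> e a' b'.
  move=> a b a' b' nAB eab a'A b'B.
  have [k /setIP [kN /astabP kA] kb] := GT_main nN0G minN0 pl1 pl2 lt12 cardO trG mprime hK nAB b'B.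
  have eab' : e a b'.
    have ka : k a = a by have := kA a (orbit_refl _ _ _); rewrite P_act.
    by rewrite -kb -{1}ka aut // (subsetP sN0G).
  have nBA : orbit 'P N0 b != orbit 'P N0 a by rewrite eq_sym.
  have [k' /setIP [kN' /astabP kB] ka] := GT_main nN0G minN0 pl1 pl2 lt12 cardO trG mprime hK nBA a'A.
  have kb' : k' b' = b' by have := kB b' b'B; rewrite P_act.
  by rewrite -ka -kb' aut // (subsetP sN0G).
split => //.
exact: (ham sGA (normal_norm nN0G) trG conn cardO mprime cb).
Qed.

Close Scope group_scope.

Theorem lemma3p4 (p q : nat) (T : finType) (e : rel T)
    (G N N0 : {group {perm T}}) (r : nat) :
  prime p -> 7 <= p -> prime q -> odd q -> q < p ->
  simple_graph e -> #|T| = 2 * p * q ->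
  connected_graph e -> vertex_transitive e ->
  minimal_transitive e G ->
  (N <| G)%g -> N :!=: 1%g ->
  (forall x : T, #|orbit 'P N x| = r) ->
  r \in [:: 2 * p; 2 * q; p * q] ->
  (N0 <| G)%g -> minnormal N0 G ->
  (forall x : T, orbit 'P N0 x = orbit 'P N x) ->
  (exists2 A, A \in orbit_blocks N &
     exists2 g, g \in N0 & g != 1%g /\ (forall a, a \in A -> g a = a)) ->
  (forall A B, A \in orbit_blocks N -> B \in orbit_blocks N -> A != B ->
     (exists a b, [/\ a \in A, b \in B & e a b]) ->
     forall a b, a \in A -> b \in B -> e a b)
  /\ hamiltonian e.
Proof.
move=> pp p7 pq oq qp _ cardT conn _ [sGA trG _] _ _ cardN rin nN0G minN0 eorb
  [A /imsetP [x0 _ ->] [g gN0 [g1 gfix]]].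
have cardO : forall x, #|orbit 'P N0 x| = r by move=> x; rewrite eorb cardN.
have hK : exists a0, ('C_N0(orbit 'P N0 a0 | 'P) != 1)%g.
  exists x0; apply/negP => /eqP e1.
  have : g \in ('C_N0(orbit 'P N0 x0 | 'P))%g.
    rewrite inE gN0; apply/astabP => y; rewrite eorb => yA.
    by rewrite P_act gfix.
  by rewrite e1 => /set1P; move/eqP: g1.
have q2 : 2 < q.
  by case: q pq oq {qp cardT rin} => [|[|[|q']]] //.
have p2 : 2 < p by apply: leq_trans p7.
have cT := Tcard cardO; rewrite cardT in cT.
have r0 : 0 < r by rewrite -(cardN x0); apply/card_gt0P; exists x0; apply: orbit_refl.
have mp : forall l, (2 * p * q = l * r)%N -> prime l -> prime #|Om N0|.
  move=> l el pl; suff -> : #|Om N0| = l by [].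
  by apply/eqP; rewrite -(eqn_pmul2r r0) -cT el.
have main : forall l1 l2, prime l1 -> prime l2 -> l1 < l2 -> r = (l1 * l2)%N -> prime #|Om N0| ->
  (forall a b a' b', orbit 'P N0 a != orbit 'P N0 b -> e a b ->
     a' \in orbit 'P N0 a -> b' \in orbit 'P N0 b -> e a' b') /\ hamiltonian e.
  move=> l1 l2 pl1 pl2 lt12 er mpr.
  apply: final_core pl1 pl2 lt12 conn sGA trG nN0G minN0 _ mpr hK.
  by move=> x; rewrite cardO er.
have [cb ham] : (forall a b a' b', orbit 'P N0 a != orbit 'P N0 b -> e a b ->
     a' \in orbit 'P N0 a -> b' \in orbit 'P N0 b -> e a' b') /\ hamiltonian e.
  move: rin; rewrite !inE => /or3P [] /eqP er.
  - apply: (main 2 p) => //; apply: (mp q) => //.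
    by rewrite er mulnC.
  - apply: (main 2 q) => //; apply: (mp p) => //.
    by rewrite er mulnCA mulnA.
  - apply: (main q p) => //; first by rewrite er mulnC.
    apply: (mp 2) => //; by rewrite er mulnA.
split => // A' B' /imsetP [xa _ ->] /imsetP [xb _ ->] nAB [a [b [aA bB eab]]] a' b' a'A b'B.
rewrite -?(eorb xa) -?(eorb xb) in aA bB a'A b'B nAB.
have eA : orbit 'P N0 a = orbit 'P N0 xa by apply/eqP; rewrite orbit_eq_mem.
have eB : orbit 'P N0 b = orbit 'P N0 xb by apply/eqP; rewrite orbit_eq_mem.
rewrite -eA in a'A nAB; rewrite -eB in b'B nAB.
exact: cb nAB eab a'A b'B.
Qed.
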